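(* Let $M$ be a finite ordinal monoid and $h\colon\Sigma\to M$. Then $(\mathcal P(M),\{1\},\subseteq,\cdot,-^\omega,-^\sharp)$ and $(\mathrm{Sat}(h),\{1\},\subseteq,\cdot,-^\omega,-^\sharp)$ (with the operations of the power ordinal monoid) are ordinal monoids with merge.
   Context: An ordinal monoid is a set $M$ with $\pi\colon M^{\mathrm{ord}}\to M$ (words of countable ordinal length), $\pi(x)=x$ on one-letter words, and generalised associativity $\pi((\pi(u_\iota))_{\iota<\alpha})=\pi(u_0u_1\cdots)$. Write $1=\pi(\varepsilon)$, $x\cdot y=\pi(xy)$, $x^\omega=\pi(xxx\cdots)$; a finite ordinal monoid is determined by $(M,1,\cdot,-^\omega)$. It is ordered by a partial order $\le$ if $u\le v$ letterwise implies $\pi(u)\le\pi(v)$. Power ordinal monoid: $\mathcal P(M)$ with $\Pi((X_\iota)_\iota)=\{\pi((x_\iota)_\iota):x_\iota\in X_\iota\}$; unit $\{1\}$, $X\cdot Y=\{xy\}$, $X^\omega=\{u\cdot v^\omega:u,v\in X^+\}$ ($X^+$ = finite nonempty products of elements of $X$). In a finite semigroup $x^{!}$ is the idempotent power of $x$ and $x^{!+k}$ the eventual value of $x^{n!+k}$; $X^\sharp=\bigcup_{k\in\mathbb N}X^{!+k}$ (powers in $(\mathcal P(M),\cdot)$). $\mathrm{Sat}(h)$ is the least subset of $\mathcal P(M)$ containing all $\{h(a)\}$ ($a\in\Sigma$) and $\{1\}$ closed under binary product, $\sharp$ and $\omega$. Ordinal monoid with merge: a tuple $(M,1,\le,\cdot,-^\omega,-^\sharp)$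 with $M$ finite, $(M,1,\le,\cdot,-^\omega)$ the presentation of an ordered finite ordinal monoid, and $-^\sharp\colon M\to M$ monotone such that for all $a,b\in M$ and all integers $k$: $a^{!+k}\le a^\sharp$, $(a^{!})^\sharp=a^{!}$, $a^\sharp\cdot a^\sharp=(a^\sharp)^\sharp=a^\sharp$, and $(a\cdot b)^\sharp=a\cdot(b\cdot a)^\sharp\cdot b$. *)

(* Defs.v *)
From HB Require Import structures.
From mathcomp Require Import all_boot all_order all_algebra.
From mathcomp Require Import boolp.

Set Implicit Arguments.
Unset Strict Implicit.
Unset Printing Implicit Defensive.

(* the order is a (strict) well-order.  Words of the same ordinal length are *)
(* identified up to order isomorphism.                                       *)

Record oword (A : Type) := OWord {
  oidx : Type;
  olt : oidx -> oidx -> Prop;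
  oletter : oidx -> A }.
Arguments oidx {A} _.
Arguments olt {A} _ _ _.
Arguments oletter {A} _ _.

Definition countable_type (I : Type) : Prop :=
  exists f : I -> nat, injective f.

Definition strict_wellorder (I : Type) (lt : I -> I -> Prop) : Prop :=
  [/\ forall x, ~ lt x x,
      forall x y z, lt x y -> lt y z -> lt x z,
      forall x y, x = y \/ lt x y \/ lt y x
    & well_founded lt].

Definition valid_word (A : Type) (w : oword A) : Prop :=
  countable_type (oidx w) /\ strict_wellorder (olt w).

Definition word_over (A : Type) (S : A -> Prop) (w : oword A) : Prop :=
  forall i, S (oletter w i).

Definition word_iso (A : Type) (w1 w2 : oword A) : Prop :=
  exists f : oidx w1 -> oidx w2,
    [/\ bijective f,
        forall i j, olt w1 i j <-> olt w2 (f i) (f j)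
      & forall i, oletter w2 (f i) = oletter w1 i].

Definition eps_word (A : Type) : oword A :=
  @OWord A void (fun _ _ => False) (fun v => match v with end).
Definition single_word (A : Type) (x : A) : oword A :=
  @OWord A unit (fun _ _ => False) (fun _ => x).
Definition pair_word (A : Type) (x y : A) : oword A :=
  @OWord A bool (fun a b => ~~ a && b) (fun b => if b then y else x).
Definition omega_word (A : Type) (x : A) : oword A :=
  @OWord A nat (fun m n => (m < n)%N) (fun _ => x).

Definition map_word (A B : Type) (f : A -> B) (w : oword A) : oword B :=
  @OWord B (oidx w) (olt w) (fun i => f (oletter w i)).

(* concatenation of a word of words (lexicographic sum of the index orders) *)
Definition flat_idx (A : Type) (W : oword (oword A)) : Type :=
  {i : oidx W & oidx (oletter W i)}.

Definition flat_lt (A : Type) (W : oword (oword A)) (p q : flat_idx W) : Prop :=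
  olt W (projT1 p) (projT1 q) \/
  exists e : projT1 p = projT1 q,
    olt (oletter W (projT1 q)) (eq_rect _ (fun i => oidx (oletter W i)) (projT2 p) _ e) (projT2 q).

Definition flatten_word (A : Type) (W : oword (oword A)) : oword A :=
  @OWord A (flat_idx W) (@flat_lt A W)
    (fun p => oletter (oletter W (projT1 p)) (projT2 p)).

Definition ordinal_monoid (A : Type) (S : A -> Prop) (pi : oword A -> A) : Prop :=
  [/\ forall w, valid_word w -> word_over S w -> S (pi w),
      forall w1 w2, valid_word w1 -> valid_word w2 -> word_over S w1 ->
        word_iso w1 w2 -> pi w1 = pi w2,
      forall x, S x -> pi (single_word x) = x
    & forall W : oword (oword A), valid_word W ->
        (forall i, valid_word (oletter W i) /\ word_over S (oletter W i)) ->
        pi (map_word pi W) = pi (flatten_word W)].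

Definition partial_order_on (A : Type) (S : A -> Prop) (le : A -> A -> Prop) :=
  [/\ forall x, S x -> le x x,
      forall x y, S x -> S y -> le x y -> le y x -> x = y
    & forall x y z, S x -> S y -> S z -> le x y -> le y z -> le x z].

Definition ordered_by (A : Type) (S : A -> Prop) (le : A -> A -> Prop)
  (pi : oword A -> A) : Prop :=
  forall (I : Type) (lt : I -> I -> Prop) (f g : I -> A),
    valid_word (OWord lt f) ->
    (forall i, [/\ S (f i), S (g i) & le (f i) (g i)]) ->
    le (pi (OWord lt f)) (pi (OWord lt g)).

Definition presentation_of (A : Type) (S : A -> Prop) (pi : oword A -> A)
  (one : A) (mul : A -> A -> A) (om : A -> A) : Prop :=
  [/\ one = pi (@eps_word A),
      forall x y, S x -> S y -> mul x y = pi (pair_word x y)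
    & forall x, S x -> om x = pi (omega_word x)].

Definition mpow (A : Type) (mul : A -> A -> A) (one : A) (x : A) (n : nat) : A :=
  iter n (mul x) one.

Definition eventual_pow (A : Type) (mul : A -> A -> A) (one : A)
  (x : A) (k : int) (y : A) : Prop :=
  exists N : nat, forall n : nat, (N <= n)%N ->
    exists j : nat, (j%:Z = (n`!)%:Z + k)%R /\ mpow mul one x j = y.

Definition ordinal_monoid_with_merge (T : finType) (S : T -> Prop)
  (one : T) (le : T -> T -> Prop) (mul : T -> T -> T) (om sharp : T -> T) : Prop :=
  [/\ partial_order_on S le,
      (exists pi : oword T -> T,
        [/\ ordinal_monoid S pi, ordered_by S le pi & presentation_of S pi one mul om]),
      (forall a, S a -> S (sharp a)),
      (forall a b, S a -> S b -> le a b -> le (sharp a) (sharp b))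
    & [/\ (forall a (k : int) y, S a -> eventual_pow mul one a k y -> le y (sharp a)),
          (forall a e, S a -> eventual_pow mul one a 0 e -> sharp e = e),
          (forall a, S a -> mul (sharp a) (sharp a) = sharp a),
          (forall a, S a -> sharp (sharp a) = sharp a)
        & (forall a b, S a -> S b -> sharp (mul a b) = mul (mul a (sharp (mul b a))) b)]].

Section Power.
Variables (M : finType) (pi : oword M -> M).

Definition om_one : M := pi (@eps_word M).
Definition om_mul (x y : M) : M := pi (pair_word x y).
Definition om_omega (x : M) : M := pi (omega_word x).

Definition set_one : {set M} := [set om_one].
Definition set_mul (X Y : {set M}) : {set M} :=
  [set om_mul x y | x in X, y in Y].
Definition set_plus (X : {set M}) : {set M} :=
  [set y | `[< exists s : seq M,
                 [/\ s != [::], all (fun x => x \in X) s & y = foldr om_mul om_one s] >]].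
Definition set_omega (X : {set M}) : {set M} :=
  [set om_mul u (om_omega v) | u in set_plus X, v in set_plus X].
Definition set_sharp (X : {set M}) : {set M} :=
  [set y | `[< exists (k : nat) (Y : {set M}),
                 eventual_pow set_mul set_one X k%:Z Y /\ y \in Y >]].
Definition set_le (X Y : {set M}) : Prop := X \subset Y.

Inductive Sat (Sigma : Type) (h : Sigma -> M) : {set M} -> Prop :=
| Sat_letter a : Sat h [set h a]
| Sat_one : Sat h set_one
| Sat_mul X Y : Sat h X -> Sat h Y -> Sat h (set_mul X Y)
| Sat_sharp X : Sat h X -> Sat h (set_sharp X)
| Sat_omega X : Sat h X -> Sat h (set_omega X).

End Power.

(* Main.v *)
Require Import Defs.
From HB Require Import structures.
From mathcomp Require Import all_boot all_order all_algebra.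
From mathcomp Require Import boolp.
From mathcomp Require Import zify.
From Stdlib Require Import Wellfounded.

Set Implicit Arguments.
Unset Strict Implicit.
Unset Printing Implicit Defensive.


Lemma inj_surj_bij (T1 T2 : Type) (f : T1 -> T2) :
  injective f -> (forall y, exists x, f x = y) -> bijective f.
Proof.
move=> fi fs; have [g Hg] := choice fs.
exists g => [x|y]; last exact: Hg.
by apply: fi; rewrite Hg.
Qed.

Lemma wf_ltn : well_founded (fun m n : nat => (m < n)%N).
Proof.
move=> n; elim: n {-2}n (leqnn n) => [|n IH] m Hm; constructor => k Hk.
  by move: (leq_trans Hk Hm).
by apply: IH; rewrite -ltnS (leq_trans Hk Hm).
Qed.

Lemma valid_of (A : Type) (I : Type) (lt : I -> I -> Prop) (f : I -> A)
  (c : I -> nat) : injective c ->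
  (forall x, ~ lt x x) -> (forall x y z, lt x y -> lt y z -> lt x z) ->
  (forall x y, x = y \/ lt x y \/ lt y x) -> well_founded lt ->
  valid_word (OWord lt f).
Proof. by move=> ci h1 h2 h3 h4; split; [exists c|split]. Qed.

Lemma valid_ow (A : Type) (f : nat -> A) :
  valid_word (@OWord A nat (fun m n => (m < n)%N) f).
Proof.
apply: (@valid_of _ _ _ _ id).
- by [].
- by move=> x; rewrite ltnn.
- by move=> x y z; apply: ltn_trans.
- by move=> x y; case: (ltngtP x y); auto.
- exact: wf_ltn.
Qed.

Lemma valid_ord (A : Type) n (f : 'I_n -> A) :
  valid_word (@OWord A 'I_n (fun i j => (i < j)%N) f).
Proof.
apply: (@valid_of _ _ _ _ val).
- exact: val_inj.
- by move=> x; rewrite ltnn.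
- by move=> x y z; apply: ltn_trans.
- by move=> x y; case: (ltngtP x y); auto => /val_inj; auto.
- exact: (wf_inverse_image _ _ _ _ wf_ltn).
Qed.

Lemma valid_pair (A : Type) (x y : A) : valid_word (pair_word x y).
Proof.
apply: (@valid_of _ _ _ _ nat_of_bool).
- by case; case.
- by case.
- by case; case; case.
- by case; case; auto.
- by case; constructor; case; constructor; case.
Qed.

Lemma valid_single (A : Type) (x : A) : valid_word (single_word x).
Proof.
apply: (@valid_of _ _ _ _ (fun _ => 0%N)).
- by case; case.
- by case.
- by case.
- by case; case; auto.
- by case; constructor.
Qed.

Lemma valid_eps (A : Type) : valid_word (@eps_word A).
Proof.
apply: (@valid_of _ _ _ _ (fun v : void => match v with end)); try by case.
Qed.

Lemma valid_iso (A : Type) (w1 w2 : oword A) :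
  word_iso w1 w2 -> valid_word w2 -> valid_word w1.
Proof.
case: w1 => I1 l1 f1; case: w2 => I2 l2 f2 [F [Fb Fo _]] /= [[c ci] [h1 h2 h3 h4]].
have Fi := bij_inj Fb.
apply: (@valid_of _ _ _ _ (c \o F)) => /=.
- by move=> x y /ci /Fi.
- by move=> x /Fo; apply: h1.
- by move=> x y z /Fo a /Fo b; apply/Fo; apply: h2 a b.
- move=> x y; case: (h3 (F x) (F y)) => [/Fi ->|[/Fo|/Fo]]; auto.
- apply: (wf_incl _ _ _ _ (wf_inverse_image _ _ _ F h4)).
  by move=> x y /Fo.
Qed.

Lemma word_iso_sym (A : Type) (w1 w2 : oword A) : word_iso w1 w2 -> word_iso w2 w1.
Proof.
case: w1 => I1 l1 f1; case: w2 => I2 l2 f2 [F [[G FG GF] Fo Fl]] /=.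
exists G; split.
- by exists F.
- by move=> i j; rewrite Fo !GF.
- by move=> i; rewrite -{2}(GF i) Fl.
Qed.

Lemma flat_lt_same (A : Type) (W : oword (oword A)) i
  (a b : oidx (oletter W i)) :
  flat_lt (existT _ i a) (existT _ i b) <-> olt W i i \/ olt (oletter W i) a b.
Proof.
rewrite /flat_lt /=; split; case=> [h|h]; auto.
- by right; case: h => e; rewrite (Prop_irrelevance e erefl).
- by right; exists erefl.
Qed.

Lemma flat_lt_diff (A : Type) (W : oword (oword A)) i j
  (a : oidx (oletter W i)) (b : oidx (oletter W j)) : i <> j ->
  flat_lt (existT _ i a) (existT _ j b) <-> olt W i j.
Proof.
move=> ij; rewrite /flat_lt /=; split; [case=> // [[e]] //|by left].
Qed.


Definition fw (A : Type) (f : nat -> A) (a n : nat) : oword A :=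
  @OWord A 'I_n (fun i j => (i < j)%N) (fun i => f (a + i)).
Definition ow (A : Type) (f : nat -> A) : oword A :=
  @OWord A nat (fun m n => (m < n)%N) f.

Lemma valid_fw (A : Type) (f : nat -> A) a n : valid_word (fw f a n).
Proof. exact: valid_ord. Qed.
Lemma valid_ow' (A : Type) (f : nat -> A) : valid_word (ow f).
Proof. exact: valid_ow. Qed.

Section OM.
Variables (A : finType) (S : A -> Prop) (pi : oword A -> A).
Hypothesis H : ordinal_monoid S pi.

Local Notation mul := (om_mul pi).
Local Notation one := (om_one pi).

Lemma pi_iso (w1 w2 : oword A) : valid_word w2 -> word_over S w1 ->
  word_iso w1 w2 -> pi w1 = pi w2.
Proof.
case: H => _ Hi _ _ v2 o1 iso; apply: Hi; [exact: valid_iso iso v2|exact: v2|exact: o1|exact: iso].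
Qed.

Lemma pi_block (W : oword (oword A)) (w : oword A) : valid_word W ->
  (forall i, valid_word (oletter W i) /\ word_over S (oletter W i)) ->
  valid_word w -> word_iso (flatten_word W) w -> pi (map_word pi W) = pi w.
Proof.
move=> vW vl vw iso; case: H => _ _ _ Ha; rewrite Ha //.
apply: pi_iso => //; case=> i j /=; exact: (proj2 (vl i)).
Qed.

Lemma pair_map (w1 w2 : oword A) :
  pair_word (pi w1) (pi w2) = map_word pi (pair_word w1 w2).
Proof. by rewrite /map_word /pair_word /=; congr OWord; apply: funext; case. Qed.

Lemma fw0 (f : nat -> A) a : pi (fw f a 0) = one.
Proof.
symmetry; apply: pi_iso; [exact: valid_fw| by case|].
exists (fun v : void => match v with end); split; try by case.
apply: inj_surj_bij; first by case.
by case=> m i; exfalso; move: i; rewrite ltn0.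
Qed.

Lemma fw1 (f : nat -> A) a : S (f a) -> pi (fw f a 1) = f a.
Proof.
move=> Sa; case: H => _ _ Hs _.
transitivity (pi (single_word (f a))); last exact: Hs.
apply: pi_iso; first exact: valid_single.
  by move=> i; rewrite /= (ord1 i) addn0.
exists (fun _ => tt); split => //.
- apply: inj_surj_bij; last by case; exists ord0.
  by move=> i j _; rewrite (ord1 i) (ord1 j).
- by move=> i j; rewrite (ord1 i) (ord1 j).
- by move=> i; rewrite /= (ord1 i) addn0.
Qed.

Definition app_map (f g : nat -> A) a n c m
  (p : flat_idx (pair_word (fw f a n) (fw g c m))) : 'I_(n + m) :=
  let: existT b i := p in
  (if b return oidx (oletter (pair_word (fw f a n) (fw g c m)) b) -> 'I_(n + m)
   then fun j => rshift n j else fun i => lshift m i) i.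

Lemma fwapp (f : nat -> A) a n m : (forall k, S (f k)) ->
  pi (fw f a (n + m)) = mul (pi (fw f a n)) (pi (fw f (a + n) m)).
Proof.
move=> hf; rewrite /om_mul pair_map; symmetry.
apply: pi_block.
- exact: valid_pair.
- by case; split; try exact: valid_fw; move=> i; exact: hf.
- exact: valid_fw.
exists (@app_map f f a n (a + n) m); split.
- apply: inj_surj_bij.
  + case=> [[] i] [[] j] /= e.
    * by congr existT; apply: val_inj; move/(congr1 val): e => /= /eqP; rewrite eqn_add2l => /eqP.
    * by move/(congr1 val): e => /= e; move: (ltn_ord j); rewrite -e ltnNge leq_addr.
    * by move/(congr1 val): e => /= e; move: (ltn_ord i); rewrite e ltnNge leq_addr.
    * by congr existT; apply: val_inj; move/(congr1 val): e.
  + move=> y; case: (splitP y) => [i hi|j hj].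
    * by exists (existT _ false i); apply: val_inj; rewrite /= hi.
    * by exists (existT _ true j); apply: val_inj; rewrite /= hj.
- case=> [[] i] [[] j] /=.
  + rewrite flat_lt_same /= ltn_add2l; split; [by case|by right].
  + rewrite flat_lt_diff //=; split => // h; exfalso.
    by move: (leq_trans h (ltnW (ltn_ord j))); rewrite ltnNge leq_addr.
  + rewrite flat_lt_diff //=; split => // _.
    exact: (leq_trans (ltn_ord i) (leq_addr _ _)).
  + rewrite flat_lt_same /=; split; [by case|by right].
- by case=> [[] i] /=; rewrite ?addnA.
Qed.

Definition split_map (f g : nat -> A) n
  (p : flat_idx (pair_word (fw f 0 n) (ow g))) : nat :=
  let: existT b i := p in
  (if b return oidx (oletter (pair_word (fw f 0 n) (ow g)) b) -> nat
   then fun j => n + j else fun i => val i) i.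

Lemma ow_split (f : nat -> A) n : (forall k, S (f k)) ->
  pi (ow f) = mul (pi (fw f 0 n)) (pi (ow (fun k => f (n + k)))).
Proof.
move=> hf; rewrite /om_mul pair_map; symmetry.
apply: pi_block.
- exact: valid_pair.
- by case; split; [exact: valid_ow| move=> i; exact: hf|exact: valid_fw|move=> i; exact: hf].
- exact: valid_ow.
exists (@split_map f (fun k => f (n + k)) n); split.
- apply: inj_surj_bij.
  + case=> [[] i] [[] j] /= e.
    * by congr existT; apply/eqP; rewrite -(eqn_add2l n) e.
    * by move: (ltn_ord j); rewrite -e ltnNge leq_addr.
    * by move: (ltn_ord i); rewrite e ltnNge leq_addr.
    * by congr existT; apply: val_inj.
  + move=> y; case: (ltnP y n) => hy.
    * by exists (existT _ false (Ordinal hy)).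
    * by exists (existT (fun b => oidx (oletter (pair_word (fw f 0 n) (ow (fun k => f (n + k)))) b)) true (y - n)) => /=; rewrite subnKC.
- case=> [[] i] [[] j] /=.
  + rewrite flat_lt_same /= ltn_add2l; split; [by case|by right].
  + rewrite flat_lt_diff //=; split => // h; exfalso.
    by move: (leq_trans h (ltnW (ltn_ord j))); rewrite ltnNge leq_addr.
  + rewrite flat_lt_diff //=; split => // _.
    exact: (leq_trans (ltn_ord i) (leq_addr _ _)).
  + rewrite flat_lt_same /=; split; [by case|by right].
- by case=> [[] i] /=.
Qed.

Definition blk_map (f : nat -> A) (b : nat -> nat)
  (p : flat_idx (ow (fun k => fw f (b k) (b k.+1 - b k)))) : nat :=
  let: existT k i := p in b k + val i.

Lemma ow_blocks (f : nat -> A) (b : nat -> nat) : (forall k, S (f k)) ->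
  b 0 = 0 -> (forall k, b k < b k.+1) ->
  pi (ow f) = pi (ow (fun k => pi (fw f (b k) (b k.+1 - b k)))).
Proof.
move=> hf b0 binc.
have mono k l : k <= l -> b k <= b l.
  elim: l => [|l IH]; first by rewrite leqn0 => /eqP ->.
  rewrite leq_eqVlt => /orP [/eqP ->//|]; rewrite ltnS => /IH h.
  exact: leq_trans h (ltnW (binc l)).
have key k k' (i : 'I_(b k.+1 - b k)) (j : 'I_(b k'.+1 - b k')) :
    k < k' -> b k + i < b k' + j.
  move=> kk; apply: (@leq_trans (b k.+1)); last exact: leq_trans (mono _ _ kk) (leq_addr _ _).
  by rewrite -ltn_subRL.
symmetry.
change (pi (map_word pi (ow (fun k => fw f (b k) (b k.+1 - b k)))) = pi (ow f)).
apply: pi_block.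
- exact: valid_ow.
- by move=> k; split; [exact: valid_fw| move=> i; exact: hf].
- exact: valid_ow.
exists (@blk_map f b); split.
- apply: inj_surj_bij.
  + case=> [k i] [k' j] /= e.
    case: (ltngtP k k') => kk.
    * by move: (key _ _ i j kk); rewrite e ltnn.
    * by move: (key _ _ j i kk); rewrite e ltnn.
    * subst k'; congr existT; apply: val_inj; apply/eqP.
      by rewrite -(eqn_add2l (b k)) e.
  + move=> y.
    have ex : exists k, y < b k.+1.
      exists y; elim: y => [|y IH]; first by rewrite (leq_ltn_trans _ (binc 0)).
      exact: leq_ltn_trans IH (binc _).
    case: (ex_minnP ex) => k hk hmin.
    have hb : b k <= y.
      case: k hk hmin => [|k] hk hmin; first by rewrite b0.
      by rewrite leqNgt; apply/negP => /hmin; rewrite ltnn.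
    have hi : y - b k < b k.+1 - b k by rewrite ltn_sub2r // (leq_ltn_trans hb hk).
    by exists (existT (fun k => oidx (oletter (ow (fun k => fw f (b k) (b k.+1 - b k))) k)) k (Ordinal hi)) => /=; rewrite subnKC.
- case=> [k i] [k' j] /=.
  case: (ltngtP k k') => kk.
  + rewrite flat_lt_diff /=; last by move=> e; move: kk; rewrite e ltnn.
    by rewrite kk; split => // _; apply: key.
  + rewrite flat_lt_diff /=; last by move=> e; move: kk; rewrite e ltnn.
    rewrite ltnNge (ltnW kk); split => // h; exfalso.
    by move: (key _ _ j i kk); rewrite ltnNge (ltnW h).
  + subst k'; rewrite flat_lt_same /= ltn_add2l ltnn; split; [by case|by right].
- by case.
Qed.

End OM.


Lemma incr_mono (b : nat -> nat) : (forall k, b k < b k.+1) ->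
  forall k l, k <= l -> b k <= b l.
Proof.
move=> binc k l; elim: l => [|l IH]; first by rewrite leqn0 => /eqP ->.
rewrite leq_eqVlt => /orP [/eqP ->//|]; rewrite ltnS => /IH h.
exact: leq_trans h (ltnW (binc l)).
Qed.

Lemma incr_smono (b : nat -> nat) : (forall k, b k < b k.+1) ->
  forall k l, k < l -> b k < b l.
Proof. by move=> binc k l kl; apply: leq_trans (binc k) (incr_mono binc kl). Qed.

Definition inf (P : nat -> Prop) := forall N, exists n, N <= n /\ P n.

Lemma pigeon (T : finType) (P : nat -> Prop) (g : nat -> T) :
  inf P -> exists t, inf (fun n => P n /\ g n = t).
Proof.
move=> hP; apply: contrapT => hn.
have hb : forall t, exists N, forall n, N <= n -> ~ (P n /\ g n = t).
  move=> t; apply: contrapT => ht; apply: hn; exists t => N.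
  apply: contrapT => hN; apply: ht; exists N => n hn' hPn; apply: hN.
  by exists n.
have [Nf HN] := choice hb.
have [n [hnn Pn]] := hP (\max_(t : T) Nf t).
apply: (HN (g n) n) => //.
apply: leq_trans hnn; exact: (leq_bigmax_cond (g n)).
Qed.

Lemma ramsey (T : finType) (c : nat -> nat -> T) :
  exists b : nat -> nat, [/\ 0 < b 0, (forall k, b k < b k.+1) &
     (forall k, c (b k) (b k.+1) = c (b 0) (b 1))].
Proof.
pose St := {Q : nat -> Prop | inf Q}.
have step_ex : forall s : St, exists r : nat * T * St,
    sval s r.1.1 /\ (forall n, sval r.2 n -> sval s n /\ r.1.1 < n /\ c r.1.1 n = r.1.2).
  case=> Q hQ /=.
  have [a [_ Qa]] := hQ 0.
  have hP : inf (fun n => Q n /\ a < n).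
    move=> N; have [n [hn Qn]] := hQ (N + a.+1); exists n; split => //.
      exact: leq_trans (leq_addr _ _) hn.
    by split => //; apply: leq_trans (leq_addl _ _) hn.
  have [t ht] := pigeon (c a) hP.
  by exists (a, t, exist _ _ ht) => /=; split => // n [[]].
have [step Hstep] := choice step_ex.
have hQ0 : inf (fun n => 0 < n).
  by move=> N; exists N.+1; split => //; apply: leqnSn.
pose st k := iter k (fun s => (step s).2) (exist _ _ hQ0 : St).
pose a k := (step (st k)).1.1.
pose col k := (step (st k)).1.2.
have sub k l : k <= l -> forall n, sval (st l) n -> sval (st k) n.
  elim: l => [|l IH]; first by rewrite leqn0 => /eqP ->.
  rewrite leq_eqVlt => /orP [/eqP ->//|]; rewrite ltnS => /IH h n.
  by rewrite /st iterS => /((Hstep (st l)).2) [/h].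
have aQ k : sval (st k) (a k) by exact: (Hstep (st k)).1.
have acol k l : k < l -> a k < a l /\ c (a k) (a l) = col k.
  move=> kl; have := aQ l; move/(sub k.+1 l kl).
  by rewrite /st iterS => /((Hstep (st k)).2) [_ []].
have [t ht] := pigeon col (P := fun _ => True) (fun N => ex_intro _ N (conj (leqnn N) I)).
have nxt_ex : forall m, exists n, m < n /\ col n = t.
  by move=> m; have [n [hn [_ cn]]] := ht m.+1; exists n.
have [nxt Hnxt] := choice nxt_ex.
pose d k := iter k.+1 nxt 0.
have dinc k : d k < d k.+1 by rewrite /d iterS; exact: (Hnxt _).1.
have dcol k : col (d k) = t by rewrite /d iterS; exact: (Hnxt _).2.
exists (fun k => a (d k)); split.
- have := aQ (d 0); move/(sub 0 _ (leq0n _)) => /=; by [].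
- by move=> k; exact: (acol _ _ (dinc k)).1.
- move=> k; rewrite (acol _ _ (dinc k)).2 (acol _ _ (dinc 0)).2.
  by rewrite !dcol.
Qed.

Section OM2.
Variables (A : finType) (S : A -> Prop) (pi : oword A -> A).
Hypothesis H : ordinal_monoid S pi.

Local Notation mul := (om_mul pi).
Local Notation one := (om_one pi).

Lemma S_pi (w : oword A) : valid_word w -> word_over S w -> S (pi w).
Proof. by case: H => Hc _ _ _; apply: Hc. Qed.

Lemma S_mul x y : S x -> S y -> S (mul x y).
Proof. by move=> Sx Sy; apply: S_pi; [exact: valid_pair|case]. Qed.

Lemma S_one : S one.
Proof. by apply: S_pi; [exact: valid_eps|case]. Qed.

Lemma S_om x : S x -> S (om_omega pi x).
Proof. by move=> Sx; apply: S_pi; [exact: valid_ow|]. Qed.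

Lemma fw_foldr (f : nat -> A) a n : (forall k, S (f k)) ->
  pi (fw f a n) = foldr mul one (map f (iota a n)).
Proof.
move=> hf; elim: n a => [|n IH] a; first by rewrite (fw0 H).
rewrite /= -IH -(fw1 H (hf a)).
by have := fwapp H a 1 n hf; rewrite addn1.
Qed.

Lemma om_mul1x x : S x -> mul one x = x.
Proof.
move=> Sx; have := fwapp H 0 0 1 (f := fun _ => x) (fun _ => Sx).
by rewrite (fw0 H) (fw1 H) // => <-; rewrite (fw1 H).
Qed.

Lemma om_mulx1 x : S x -> mul x one = x.
Proof.
move=> Sx; have := fwapp H 0 1 0 (f := fun _ => x) (fun _ => Sx).
by rewrite (fw0 H) (fw1 H) // => <-; rewrite (fw1 H).
Qed.

Lemma om_mulA x y z : S x -> S y -> S z -> mul (mul x y) z = mul x (mul y z).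
Proof.
move=> Sx Sy Sz.
pose f k := if k == 0 then x else if k == 1 then y else z.
have hf k : S (f k) by rewrite /f; case: ifP => // _; case: ifP.
have e1 := fwapp H 0 2 1 hf.
have e2 := fwapp H 0 1 2 hf.
have e3 := fwapp H 0 1 1 hf.
have e4 := fwapp H 1 1 1 hf.
rewrite /= in e1 e2 e3 e4.
rewrite e3 e4 !(fw1 H) // in e1 e2.
by rewrite -e1 e2.
Qed.

Lemma omega_decomp (f : nat -> A) : (forall k, S (f k)) ->
  exists n0 n1, [/\ 0 < n0, n0 < n1 &
    pi (ow f) = mul (pi (fw f 0 n0)) (om_omega pi (pi (fw f n0 (n1 - n0))))].
Proof.
move=> hf.
have [b [b0 binc bc]] := ramsey (fun i j => pi (fw f i (j - i))).
exists (b 0), (b 1); split; [exact: b0|exact: binc 0|].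
rewrite (ow_split H (b 0) hf); congr mul.
have hg k : S (f (b 0 + k)) by [].
have bm := incr_mono binc.
rewrite (@ow_blocks _ _ _ H _ (fun k => b k - b 0) hg); last 2 first.
- by rewrite subnn.
- move=> k; have := bm 0 k (leq0n _); have := binc k; lia.
rewrite /om_omega /omega_word; congr pi; rewrite /ow; congr OWord.
apply: funext => k; rewrite -(bc k); congr pi.
have h0 := bm 0 k (leq0n _); have h1 := bm 0 k.+1 (leq0n _).
have -> : b k.+1 - b 0 - (b k - b 0) = b k.+1 - b k by lia.
rewrite /fw; congr OWord; apply: funext => i /=; congr f; lia.
Qed.

End OM2.


Section Pow.
Variables (M : finType) (pi : oword M -> M).
Hypothesis H : ordinal_monoid (fun _ : M => True) pi.

Definition Pi (W : oword {set M}) : {set M} :=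
  [set y | `[< exists g : oidx W -> M,
      (forall i, g i \in oletter W i) /\ y = pi (OWord (olt W) g) >]].

Lemma inPi W y : y \in Pi W <->
  exists g : oidx W -> M, (forall i, g i \in oletter W i) /\ y = pi (OWord (olt W) g).
Proof. by rewrite inE; split => /asboolP. Qed.

Lemma Pi_iso_sub (w1 w2 : oword {set M}) : valid_word w2 -> word_iso w1 w2 ->
  Pi w1 \subset Pi w2.
Proof.
case: w1 => I1 l1 f1; case: w2 => I2 l2 f2 v2 [F [[G FG GF] Fo Fl]].
apply/subsetP => y /inPi [g [hg ->]]; apply/inPi; exists (fun j => g (G j)); split.
  move=> j; have := Fl (G j); rewrite /= GF => ->; exact: hg.
apply: (pi_iso H) => //.
exists F; split => //; first by exists G.
by move=> i /=; rewrite FG.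
Qed.

Lemma Pi_single X : Pi (single_word X) = X.
Proof.
apply/setP => y; apply/idP/idP.
- move/inPi; case=> g [hg ->]; case: H => _ _ Hs _.
  have -> : OWord (olt (single_word X)) g = single_word (g tt).
    by rewrite /single_word; congr OWord; apply: funext; case.
  by rewrite Hs //; exact: hg tt.
- move=> yX; apply/inPi; exists (fun _ => y); split => //.
  by case: H => _ _ Hs _; rewrite -[LHS](Hs y I).
Qed.

Lemma Pi_assoc (W : oword (oword {set M})) : valid_word W ->
  (forall i, valid_word (oletter W i)) ->
  Pi (map_word Pi W) = Pi (flatten_word W).
Proof.
move=> vW vl; case: H => _ _ _ Ha.
apply/setP => y; apply/idP/idP => /inPi hy; apply/inPi; move: hy.
- case=> g [hg ->].
  have hex i : exists f : oidx (oletter W i) -> M,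
      (forall j, f j \in oletter (oletter W i) j) /\ g i = pi (OWord (olt (oletter W i)) f).
    by apply/inPi; exact: hg i.
  pose F i := proj1_sig (cid (hex i)).
  have HF i : (forall j, F i j \in oletter (oletter W i) j) /\
      g i = pi (OWord (olt (oletter W i)) (F i)) := proj2_sig (cid (hex i)).
  pose W' := @OWord (oword M) (oidx W) (olt W)
      (fun i => @OWord M (oidx (oletter W i)) (olt (oletter W i)) (F i)).
  exists (fun p => F (projT1 p) (projT2 p)); split.
    by case=> i j /=; exact: (HF i).1.
  have -> : OWord (olt (map_word Pi W)) g = map_word pi W'.
    by rewrite /map_word /=; congr OWord; apply: funext => i; rewrite (HF i).2.
  rewrite Ha; [reflexivity|exact: vW|move=> i; split; [exact: vl|by []]].
- case=> G [hG ->].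
  pose F i (j : oidx (oletter W i)) := G (existT _ i j).
  pose W' := @OWord (oword M) (oidx W) (olt W)
      (fun i => @OWord M (oidx (oletter W i)) (olt (oletter W i)) (F i)).
  exists (fun i => pi (OWord (olt (oletter W i)) (F i))); split.
    move=> i; apply/inPi; exists (F i); split => // j; exact: hG.
  have -> : OWord (olt (flatten_word W)) G = flatten_word W'.
    by rewrite /flatten_word /=; congr OWord; apply: funext; case.
  rewrite -Ha; [reflexivity|exact: vW|move=> i; split; [exact: vl|by []]].
Qed.

Lemma Pi_om : ordinal_monoid (fun _ : {set M} => True) Pi.
Proof.
split => //.
- move=> w1 w2 v1 v2 _ iso; apply/eqP; rewrite eqEsubset.
  rewrite !Pi_iso_sub; [by []|exact: v1|exact: word_iso_sym|exact: v2|exact: iso].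
- by move=> x _; exact: Pi_single.
- move=> W vW vl; apply: Pi_assoc; [exact: vW|move=> i; exact: (vl i).1].
Qed.

Lemma Pi_ordered : ordered_by (fun _ : {set M} => True) (@set_le M) Pi.
Proof.
move=> I lt f g _ hfg; apply/subsetP => y /inPi [k [hk ->]]; apply/inPi.
exists k; split => // i; case: (hfg i) => _ _ /subsetP; apply; exact: hk.
Qed.

Lemma Pi_one : set_one pi = Pi (@eps_word {set M}).
Proof.
apply/setP => y; rewrite inE; apply/idP/idP => [/eqP ->|/inPi].
- apply/inPi; exists (fun v : void => match v with end); split; first by case.
  by rewrite /om_one /eps_word; congr pi; congr OWord; apply: funext; case.
- case=> g [_ ->]; apply/eqP; rewrite /om_one /eps_word; congr pi; congr OWord.
  by apply: funext; case.
Qed.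

Lemma Pi_mul X Y : set_mul pi X Y = Pi (pair_word X Y).
Proof.
apply/setP => z; apply/idP/idP => [/imset2P|/inPi].
- case=> x y xX yY ->; apply/inPi.
  exists (fun b : bool => if b then y else x); split; first by case.
  by [].
- case=> g [hg ->]; apply/imset2P; exists (g false) (g true).
  + exact: hg false.
  + exact: hg true.
  + rewrite /om_mul /pair_word; congr pi; congr OWord; apply: funext; by case.
Qed.

Local Notation mul := (om_mul pi).
Local Notation one := (om_one pi).

Lemma foldr_plus (X : {set M}) (f : nat -> M) a n : 0 < n -> (forall k, f k \in X) ->
  pi (fw f a n) \in set_plus pi X.
Proof.
move=> n0 hf; rewrite inE; apply/asboolP.
exists (map f (iota a n)); split.
- by case: n n0.
- by apply/allP => x /mapP [k _ ->].
- exact: (fw_foldr H).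
Qed.

Lemma Pi_omega X : set_omega pi X = Pi (omega_word X).
Proof.
apply/setP => z; apply/idP/idP => [|/inPi].
- case/imset2P => u v; rewrite !inE => /asboolP [s [s0 sX ->]] /asboolP [t [t0 tX ->]] ->.
  have [x0 s0'] : exists x0, x0 \in s by case: s s0 sX => // x s' _ _; exists x; rewrite inE eqxx.
  have t0' : 0 < size t by case: t t0 tX.
  pose g n := if n < size s then nth x0 s n else nth x0 t ((n - size s) %% size t).
  have gX n : g n \in X.
    rewrite /g; case: ifP => hn.
      by move/allP: sX; apply; rewrite mem_nth.
    by move/allP: tX; apply; rewrite mem_nth // ltn_mod.
  apply/asboolP; exists g; split => //.
  change (mul (foldr mul one s) (om_omega pi (foldr mul one t)) = pi (ow g)).
  rewrite (ow_split H (size s) (fun _ => I)).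
  congr mul.
    rewrite (fw_foldr H) //; congr foldr.
    apply/esym; rewrite -[in RHS](mkseq_nth x0 s) /mkseq; apply/eq_in_map => k.
    by rewrite mem_iota /g add0n => /andP [_ ->].
  rewrite (@ow_blocks _ _ _ H _ (fun k => k * size t) (fun _ => I)) //; last first.
    by move=> k; rewrite mulSn -[X in X < _]add0n ltn_add2r.
  rewrite /om_omega /omega_word; congr pi; rewrite /ow; congr OWord.
  apply: funext => k; rewrite mulSn addnK (fw_foldr H) //; congr foldr.
  apply/esym; rewrite -[in RHS](mkseq_nth x0 t) /mkseq -(addn0 (k * size t)) iotaDl -map_comp.
  apply/eq_in_map => i; rewrite mem_iota add0n => /andP [_ hi] /=.
  rewrite /g ltnNge leq_addr /= addKn.
by rewrite modnMDl modn_small.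
- case=> g [hg ->].
  have [n0 [n1 [h0 h1 ->]]] := omega_decomp H (f := g) (fun _ => I).
  apply/imset2P; exists (pi (fw g 0 n0)) (pi (fw g n0 (n1 - n0))) => //.
  + exact: foldr_plus.
  + by apply: foldr_plus => //; rewrite subn_gt0.
Qed.

End Pow.


Section FM.
Variables (T : finType) (mul : T -> T -> T) (one : T).
Hypothesis mA : forall x y z, mul (mul x y) z = mul x (mul y z).
Hypothesis m1x : forall x, mul one x = x.
Hypothesis mx1 : forall x, mul x one = x.

Local Notation pw := (mpow mul one).

Lemma pwS x n : pw x n.+1 = mul x (pw x n).
Proof. by []. Qed.

Lemma pwD x m n : pw x (m + n) = mul (pw x m) (pw x n).
Proof. by elim: m => [|m IH]; rewrite ?m1x // addSn !pwS IH mA. Qed.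

Definition perio x N p := 0 < p /\ forall n, N <= n -> pw x (n + p) = pw x n.

Lemma periodic x : exists N p, perio x N p.
Proof.
pose f (i : 'I_(#|T|.+1)) := pw x i.
have [i [j [ij fij]]] : exists i j : 'I_#|T|.+1, (i < j)%N /\ f i = f j.
  apply: contrapT => hn.
  suff fi : injective f by have := leq_card f fi; rewrite card_ord ltnn.
  move=> i j e; apply: val_inj; case: (ltngtP i j) => h //; exfalso; apply: hn.
    by exists i, j.
  by exists j, i.
exists i, (j - i); split; first by rewrite subn_gt0.
move=> n hn.
have -> : n + (j - i) = (n - i) + j by have := ltnW ij; lia.
have fij' : pw x i = pw x j := fij.
by rewrite pwD -fij' -pwD subnK.
Qed.

Lemma perio_add x N p n q : perio x N p -> N <= n -> pw x (n + q * p) = pw x n.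
Proof.
case=> p0 hp hn; elim: q => [|q IH]; first by rewrite addn0.
have -> : n + q.+1 * p = (n + q * p) + p by rewrite mulSn; lia.
by rewrite hp ?IH // (leq_trans hn) // leq_addr.
Qed.

Lemma perio_congr x N p a b : perio x N p -> N <= a -> N <= b ->
  a = b %[mod p] -> pw x a = pw x b.
Proof.
move=> hp; wlog ab : a b / a <= b.
  move=> W ha hb e; case: (leqP a b) => h; first exact: (W a b h ha hb e).
  by symmetry; apply: W; [exact: ltnW h|exact: hb|exact: ha|rewrite e].
move=> ha hb e; have : p %| b - a by rewrite -eqn_mod_dvd // e.
move=> /dvdnP [q hq].
by rewrite -(subnKC ab) hq (perio_add _ hp).
Qed.

Lemma E1 x (k : int) y N p : perio x N p -> eventual_pow mul one x k y ->
  exists j n, [/\ N <= j, y = pw x j, (j%:Z = (n`!)%:Z + k)%R & p %| n`!].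
Proof.
move=> [p0 hp] [N0 hN0].
pose n := maxn N0 (maxn p (N + `|k|)).
have [j [hj <-]] := hN0 n (leq_maxl _ _).
exists j, n; split => //.
- have h1 := fact_geq n.
  have h2 : N + `|k| <= n by rewrite /n !leq_max leqnn !orbT.
  lia.
- apply: dvdn_fact; rewrite p0 /n !leq_max leqnn orbT //.
Qed.

Lemma E2 x N p j : perio x N p -> N <= j -> eventual_pow mul one x j%:Z (pw x j).
Proof.
move=> hp hj; exists p => n hn; exists (n`! + j); split.
  by rewrite PoszD.
apply: (perio_congr hp _ hj).
  exact: leq_trans hj (leq_addl _ _).
have hd : p %| n`! by apply: dvdn_fact; case: hp => -> _.
by rewrite -modnDml (eqP hd) add0n.
Qed.

Lemma pw_idem e n : mul e e = e -> pw e n.+1 = e.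
Proof. by move=> ee; elim: n => [|n IH]; [rewrite pwS mx1|rewrite pwS IH]. Qed.

End FM.


Section Sharp.
Variables (M : finType) (pi : oword M -> M).
Hypothesis H : ordinal_monoid (fun _ : M => True) pi.

Local Notation smul := (set_mul pi).
Local Notation sone := (set_one pi).
Local Notation spw := (mpow smul sone).
Local Notation sharp := (set_sharp pi).

Lemma mem_smul X Y z : z \in smul X Y <->
  exists x y, [/\ x \in X, y \in Y & z = om_mul pi x y].
Proof.
split; first by case/imset2P => x y hx hy ->; exists x, y.
by case=> x [y [hx hy ->]]; apply/imset2P; exists x y.
Qed.

Lemma smulA X Y Z : smul (smul X Y) Z = smul X (smul Y Z).
Proof.
apply/setP => w; apply/idP/idP.
- case/mem_smul => xy [z [/mem_smul [x [y [hx hy ->]]] hz ->]].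
  apply/mem_smul; exists x, (om_mul pi y z); split => //.
    by apply/mem_smul; exists y, z.
  by rewrite (om_mulA H).
- case/mem_smul => x [yz [hx /mem_smul [y [z [hy hz ->]]] ->]].
  apply/mem_smul; exists (om_mul pi x y), z; split => //.
    by apply/mem_smul; exists x, y.
  by rewrite (om_mulA H).
Qed.

Lemma smul1X X : smul sone X = X.
Proof.
apply/setP => w; apply/idP/idP.
- by case/mem_smul => o [x [/set1P -> hx ->]]; rewrite (om_mul1x H).
- by move=> hw; apply/mem_smul; exists (om_one pi), w; rewrite set11 (om_mul1x H).
Qed.

Lemma smulX1 X : smul X sone = X.
Proof.
apply/setP => w; apply/idP/idP.
- by case/mem_smul => x [o [hx /set1P -> ->]]; rewrite (om_mulx1 H).
- by move=> hw; apply/mem_smul; exists w, (om_one pi); rewrite set11 (om_mulx1 H).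
Qed.

Lemma smul_sub (X X' Y Y' : {set M}) : X' \subset X -> Y' \subset Y -> smul X' Y' \subset smul X Y.
Proof.
move=> /subsetP hX /subsetP hY; apply/subsetP => z /mem_smul [x [y [hx hy ->]]].
by apply/mem_smul; exists x, y; split; [apply: hX|apply: hY|].
Qed.

Lemma spw_sub (X Y : {set M}) n : X \subset Y -> spw X n \subset spw Y n.
Proof.
move=> hXY; elim: n => [|n IH]; first exact: subxx.
by rewrite !pwS; apply: smul_sub.
Qed.

Local Notation perio := (perio smul sone).

Lemma sperio X : exists N p, perio X N p.
Proof. exact: (periodic smulA smul1X). Qed.

Lemma sharpE X N p : perio X N p ->
  forall y, y \in sharp X <-> exists j, N <= j /\ y \in spw X j.
Proof.
move=> hp y; rewrite inE; split.
- move/asboolP => [k [Y [hY yY]]].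
  have [j [n [hj hYe _ _]]] := E1 hp hY.
  by exists j; rewrite -hYe.
- case=> j [hj hy]; apply/asboolP; exists j, (spw X j); split => //.
  exact: E2 hp hj.
Qed.

Lemma sharp_idem E : smul E E = E -> sharp E = E.
Proof.
move=> ee.
have hp : perio E 1 1.
  split => // n; case: n => // n _.
  by rewrite addn1 !(pw_idem smulX1).
apply/setP => y; apply/idP/idP.
- move/(sharpE hp) => [[|j] [hj]]; first by []. by rewrite (pw_idem smulX1).
- by move=> hy; apply/(sharpE hp); exists 1; rewrite (pw_idem smulX1).
Qed.

Lemma m1 X (k : int) Y : eventual_pow smul sone X k Y -> Y \subset sharp X.
Proof.
move=> hY; have [N [p hp]] := sperio X.
have [j [n [hj -> _ _]]] := E1 hp hY.
by apply/subsetP => y hy; apply/(sharpE hp); exists j.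
Qed.

Lemma m3 X : smul (sharp X) (sharp X) = sharp X.
Proof.
have [N [p hp]] := sperio X.
have hp0 : 0 < p by case: hp.
apply/setP => z; apply/idP/idP.
- case/mem_smul => u [v [/(sharpE hp) [a [ha hu]] /(sharpE hp) [b [hb hv]] ->]].
  apply/(sharpE hp); exists (a + b); split; first exact: leq_trans ha (leq_addr _ _).
  by rewrite (pwD smulA smul1X); apply/mem_smul; exists u, v.
- case/(sharpE hp) => j [hj hz].
  pose b := j + N * p - N.
  have hb : N <= b by rewrite /b; nia.
  have e : spw X (N + b) = spw X j.
    apply: (perio_congr hp) => //; first exact: leq_addr.
    have -> : N + b = j + N * p by rewrite /b; nia.
    by rewrite addnC modnMDl.
  move: hz; rewrite -e (pwD smulA smul1X) => /mem_smul [u [v [hu hv ->]]].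
  apply/mem_smul; exists u, v; split => //.
    by apply/(sharpE hp); exists N.
  by apply/(sharpE hp); exists b.
Qed.

Lemma m2 X E : eventual_pow smul sone X 0 E -> sharp E = E.
Proof.
move=> hE; have [N [p hp]] := sperio X.
have [j [n [hj -> hjn hd]]] := E1 hp hE.
have jn : j = n`! by lia.
apply: sharp_idem; rewrite -(pwD smulA smul1X).
apply: (perio_congr hp) => //; first exact: leq_trans hj (leq_addr _ _).
rewrite jn -[in LHS]modnDml (eqP hd) add0n.
exact: (eqP hd).
Qed.

Lemma m4 X : sharp (sharp X) = sharp X.
Proof. by apply: sharp_idem; exact: m3. Qed.

Lemma sharp_mono (X Y : {set M}) : X \subset Y -> sharp X \subset sharp Y.
Proof.
move=> hXY; have [N [p hp]] := sperio X; have [N' [p' hp']] := sperio Y.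
have hp0 : 0 < p by case: hp.
apply/subsetP => z /(sharpE hp) [j [hj hz]].
apply/(sharpE hp'); exists (j + N' * p); split; first by nia.
move: hz; rewrite -(@perio_add _ _ _ _ _ _ _ N' hp hj) => hz.
by apply: (subsetP (spw_sub _ hXY)).
Qed.

Lemma pw_shift X Y n : smul (smul X (spw (smul Y X) n)) Y = spw (smul X Y) n.+1.
Proof.
elim: n => [|n IH]; first by rewrite smulX1 /= smulX1.
by rewrite pwS [in RHS]pwS -IH !smulA.
Qed.

Lemma m5 X Y : sharp (smul X Y) = smul (smul X (sharp (smul Y X))) Y.
Proof.
have [N [p hp]] := sperio (smul X Y); have [N' [p' hp']] := sperio (smul Y X).
have hp0 : 0 < p by case: hp.
have hp0' : 0 < p' by case: hp'.
apply/setP => z; apply/idP/idP.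
- case/(sharpE hp) => j [hj hz].
  pose j' := j + N'.+1 * p.
  have e : spw (smul X Y) j'.-1.+1 = spw (smul X Y) j.
    have -> : j'.-1.+1 = j' by rewrite /j'; nia.
    exact: perio_add hp hj.
  move: hz; rewrite -e -pw_shift; apply/subsetP; apply: smul_sub => //.
  apply: smul_sub => //; apply/subsetP => s hs; apply/(sharpE hp').
  by exists j'.-1; split => //; rewrite /j'; nia.
- case/mem_smul => xs [y [/mem_smul [x [s [hx /(sharpE hp') [j [hj hs]] ->]]] hy ->]].
  apply/(sharpE hp); exists (j + N * p').+1; split; first by nia.
  rewrite -pw_shift (perio_add _ hp' hj).
  by apply/mem_smul; exists (om_mul pi x s), y; split => //; apply/mem_smul; exists x, s.
Qed.

End Sharp.


Lemma sig_eq (A : Type) (P : A -> Prop) (a b : {x | P x}) :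
  proj1_sig a = proj1_sig b -> a = b.
Proof.
case: a => a pa; case: b => b pb /= e; subst b; congr exist; exact: Prop_irrelevance.
Qed.

Section Trans.
Variables (M : finType) (pi : oword M -> M).
Hypothesis H : ordinal_monoid (fun _ : M => True) pi.
Variable T : {set M} -> Prop.
Hypothesis T1 : T (set_one pi).
Hypothesis Tm : forall X Y, T X -> T Y -> T (set_mul pi X Y).
Hypothesis To : forall X, T X -> T (set_omega pi X).

Local Notation PI := (Pi pi).
Let HP := Pi_om H.

Lemma omulP X Y : om_mul PI X Y = set_mul pi X Y.
Proof. by rewrite Pi_mul. Qed.
Lemma ooneP : om_one PI = set_one pi.
Proof. by rewrite Pi_one. Qed.
Lemma oomP X : om_omega PI X = set_omega pi X.
Proof. by rewrite Pi_omega. Qed.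

Lemma T_foldr (s : seq {set M}) : (forall x, x \in s -> T x) ->
  T (foldr (om_mul PI) (om_one PI) s).
Proof.
elim: s => [|x s IH] hs /=; first by rewrite ooneP.
rewrite omulP; apply: Tm; first by apply: hs; rewrite inE eqxx.
by apply: IH => y hy; apply: hs; rewrite inE hy orbT.
Qed.

Lemma T_fw f a n : (forall k, T (f k)) -> T (PI (fw f a n)).
Proof.
move=> hf; rewrite (fw_foldr HP) //; apply: T_foldr => x /mapP [k _ ->]; exact: hf.
Qed.

Lemma T_ow f : (forall k, T (f k)) -> T (PI (ow f)).
Proof.
move=> hf; have [n0 [n1 [_ _ ->]]] := omega_decomp HP (f := f) (fun _ => I).
by rewrite omulP oomP; apply: Tm; [|apply: To]; apply: T_fw.
Qed.

Section Word.
Variables (I : Type) (lt : I -> I -> Prop) (X : I -> {set M}) (code : I -> nat).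
Hypotheses (ci : injective code) (irr : forall x, ~ lt x x)
  (tr : forall x y z, lt x y -> lt y z -> lt x z)
  (tri : forall x y, x = y \/ lt x y \/ lt y x) (wf : well_founded lt)
  (TX : forall k, T (X k)).

Definition le x y := x = y \/ lt x y.
Definition below k (o : option I) := match o with None => True | Some j => lt k j end.
Definition seg (P : I -> Prop) : oword {set M} :=
  @OWord {set M} {k : I | P k} (fun a b => lt (proj1_sig a) (proj1_sig b))
    (fun a => X (proj1_sig a)).

Lemma valid_seg P : valid_word (seg P).
Proof.
apply: (@valid_of _ _ _ _ (fun a => code (proj1_sig a))).
- by move=> a b /ci /sig_eq.
- by move=> a; apply: irr.
- by move=> a b c; apply: tr.
- by move=> a b; case: (tri (proj1_sig a) (proj1_sig b)) => [/sig_eq|]; auto.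
- exact: (wf_inverse_image _ _ _ _ wf).
Qed.

Lemma le_lt x y z : le x y -> lt y z -> lt x z.
Proof. by case=> [->//|h]; apply: tr. Qed.
Lemma lt_le x y z : lt x y -> le y z -> lt x z.
Proof. by move=> h [<-//|h']; apply: tr h h'. Qed.
Lemma le_trans x y z : le x y -> le y z -> le x z.
Proof. by move=> h [<-//|h']; right; apply: le_lt h h'. Qed.
Lemma below_lt m k o : lt m k -> below k o -> below m o.
Proof. by case: o => //= j; apply: tr. Qed.
Lemma below_le m k o : le m k -> below k o -> below m o.
Proof. by case=> [->//|]; apply: below_lt. Qed.
Lemma lt_asym x y : lt x y -> lt y x -> False.
Proof. by move=> a b; apply: (irr (tr a b)). Qed.
Lemma not_lt_le x y : ~ lt x y -> le y x.
Proof. by move=> h; case: (tri x y) => [->|[//|]]; [left|right]. Qed.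

Definition R (o1 o2 : option I) := match o1 with Some a => below a o2 | None => False end.

Lemma wfR : well_founded R.
Proof.
have hS : forall a, Acc R (Some a).
  elim/(well_founded_ind wf) => a IH; constructor; case=> // b /= hb; exact: IH.
case=> [a|]; first exact: hS.
by constructor; case=> // b _; exact: hS.
Qed.

Definition Q o := forall i, (match o with None => True | Some j => le i j end) ->
  T (PI (seg (fun k => le i k /\ below k o))).


Lemma case_empty P : (forall k, ~ P k) -> T (PI (seg P)).
Proof.
move=> hP.
have e : PI (@eps_word {set M}) = PI (seg P).
  apply: (pi_iso HP); [exact: valid_seg|by case|].
  exists (fun v : void => match v with end); split; try by case.
  apply: inj_surj_bij; first by case.
  by case=> y py; exfalso; apply: (hP y).
by rewrite -e -Pi_one.
Qed.

Lemma case_succ i o k : le i k -> below k o -> (forall m, lt k m -> ~ below m o) ->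
  T (PI (seg (fun m => le i m /\ below m (Some k)))) ->
  T (PI (seg (fun m => le i m /\ below m o))).
Proof.
move=> hik hk hmax Tk.
pose P := fun m => le i m /\ below m o.
pose Pk := fun m => le i m /\ below m (Some k).
pose W := pair_word (seg Pk) (single_word (X k)).
have hpk : P k := conj hik hk.
have hpa : forall a : {m | Pk m}, P (proj1_sig a).
  by case=> m [h1 h2]; split => //; apply: below_lt h2 hk.
pose F := fun p : flat_idx W => match p with existT b a =>
  (if b return oidx (oletter W b) -> {m | P m} then fun _ => exist P k hpk
   else fun a => exist P (proj1_sig a) (hpa a)) a end.
have e : PI (map_word PI W) = PI (seg P).
  apply: (pi_block HP); [exact: valid_pair| |exact: valid_seg|].
    by case; split; [exact: valid_single|by []|exact: valid_seg|by []].
  exists F; split.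
  - apply: inj_surj_bij.
    + case=> [[] a] [[] b] /= e.
      * by case: a; case: b.
      * by exfalso; case: b e => m [_ hm] /(congr1 (@proj1_sig _ _)) /= ek; rewrite ek in hm; apply: (irr hm).
      * by exfalso; case: a e => m [_ hm] /(congr1 (@proj1_sig _ _)) /= ek; rewrite -ek in hm; apply: (irr hm).
      * by congr existT; apply: sig_eq; exact: (congr1 (@proj1_sig _ _) e).
    + case=> m pm; case: (tri m k) => [emk|[hmk|hkm]].
      * by exists (existT _ true tt); apply: sig_eq; rewrite /= emk.
      * by exists (existT (fun b => oidx (oletter W b)) false (exist Pk m (conj pm.1 hmk))); apply: sig_eq.
      * by exfalso; apply: (hmax m hkm); case: pm.
  - case=> [[] a] [[] b] /=.
    + rewrite flat_lt_same /=; split; first by case.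
      by move=> h; exfalso; apply: (irr h).
    + rewrite flat_lt_diff //=; split => // h; exfalso.
      by case: b h => m [_ hm] /= h; apply: lt_asym h hm.
    + rewrite flat_lt_diff //=; split => // _.
      exact: (proj2_sig a).2.
    + rewrite flat_lt_same /=; split; first by case.
      by move=> h; right.
  - by case=> [[] a].
move: e; rewrite -(pair_map PI) -Pi_mul (Pi_single H) => <-.
by apply: Tm.
Qed.

Lemma case_limit i o : below i o ->
  (forall k, le i k -> below k o -> exists m, lt k m /\ below m o) ->
  (forall j, below j o -> forall i', le i' j ->
     T (PI (seg (fun m => le i' m /\ below m (Some j))))) ->
  T (PI (seg (fun m => le i m /\ below m o))).
Proof.
move=> hio lim IH.
pose P := fun m => le i m /\ below m o.
pose SP := {x : I | P x}.
have step_ex : forall p : nat * SP, exists y : SP,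
    lt (proj1_sig p.2) (proj1_sig y) /\
    (forall c, code c = p.1 -> P c -> lt c (proj1_sig y)).
  case=> n [x [hix hxo]] /=.
  have [m [hxm [him hmo] hc]] : exists m, [/\ le x m, P m &
      forall c, code c = n -> P c -> le c m].
    case: (pselect (exists c, code c = n /\ P c)) => [[c [hcc pc]]|hn].
      case: (pselect (lt x c)) => hxc.
        exists c; split => //; first by right.
        by move=> c' hc' _; rewrite (ci (etrans hc' (esym hcc))); left.
      exists x; split => //; first by left.
      by move=> c' hc' _; rewrite (ci (etrans hc' (esym hcc))); apply: not_lt_le.
    exists x; split => //; first by left.
    by move=> c hc pc; exfalso; apply: hn; exists c.
  have [y [hmy hyo]] := lim m him hmo.
  exists (exist P y (conj (le_trans him (or_intror hmy)) hyo)) => /=; split.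
    exact: le_lt hxm hmy.
  by move=> c hc1 pc; apply: le_lt (hc c hc1 pc) hmy.
have [stepf Hstep] := choice step_ex.
pose a0 : SP := exist P i (conj (or_introl erefl) hio).
pose aa := fix aa n := match n with 0 => a0 | n'.+1 => stepf (n', aa n') end.
pose a n := proj1_sig (aa n).
have a_inc n : lt (a n) (a n.+1) by exact: (Hstep (n, aa n)).1.
have a_in n : P (a n) := proj2_sig (aa n).
have a_cof c : P c -> lt c (a (code c).+1).
  by move=> pc; exact: (Hstep (code c, aa (code c))).2 c erefl pc.
have a_mono n m : n <= m -> le (a n) (a m).
  elim: m => [|m IHm]; first by rewrite leqn0 => /eqP ->; left.
  rewrite leq_eqVlt => /orP [/eqP ->|]; first by left.
  by rewrite ltnS => /IHm h; right; apply: le_lt h (a_inc m).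
have a_smono n m : n < m -> lt (a n) (a m).
  by move=> nm; apply: lt_le (a_inc n) (a_mono _ _ nm).
pose Wf := fun n => seg (fun m => le (a n) m /\ below m (Some (a n.+1))).
pose W := ow Wf.
have hF : forall n (b : oidx (Wf n)), P (proj1_sig b).
  move=> n [m [h1 h2]] /=; split.
    exact: le_trans (a_in n).1 h1.
  exact: below_lt h2 (a_in n.+1).2.
pose F := fun p : flat_idx W => exist P (proj1_sig (projT2 p)) (hF (projT1 p) (projT2 p)).
have e : PI (map_word PI W) = PI (seg P).
  apply: (pi_block HP); [exact: valid_ow| |exact: valid_seg|].
    by move=> n; split; [exact: valid_seg|].
  have chain n m (b : oidx (Wf n)) (c : oidx (Wf m)) : n < m ->
      lt (proj1_sig b) (proj1_sig c).
    move=> nm; have hx := (proj2_sig b).2; have hy := (proj2_sig c).1.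
    exact: lt_le hx (le_trans (a_mono _ _ nm) hy).
  exists F; split.
  - apply: inj_surj_bij.
    + case=> n b [m c] /= /(congr1 (@proj1_sig _ _)) /= ev.
      case: (ltngtP n m) => nm.
      * by exfalso; have := chain _ _ b c nm; rewrite ev; apply: irr.
      * by exfalso; have := chain _ _ c b nm; rewrite ev; apply: irr.
      * by subst m; congr existT; apply: sig_eq.
    + case=> m pm.
      have ex : exists n, `[< lt m (a n.+1) >] by exists (code m); apply/asboolP; exact: a_cof.
      case: (ex_minnP ex) => n /asboolP hn hmin.
      have hle : le (a n) m.
        case: n hn hmin => [|n] hn hmin; first exact: pm.1.
        apply: not_lt_le => h.
        by have := hmin n (introT (asboolP _) h); rewrite ltnn.
      by exists (existT (fun n => oidx (Wf n)) n (exist _ m (conj hle hn))); apply: sig_eq.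
  - case=> n b [m c] /=.
    case: (ltngtP n m) => nm.
    + rewrite flat_lt_diff /=; last by move=> en; move: nm; rewrite en ltnn.
      by rewrite nm; split => // _; apply: chain.
    + rewrite flat_lt_diff /=; last by move=> en; move: nm; rewrite en ltnn.
      rewrite ltnNge (ltnW nm); split => // h; exfalso.
      exact: lt_asym h (chain _ _ c b nm).
    + subst m; rewrite flat_lt_same /= ltnn; split; [by case|by right].
  - by case.
rewrite -e; apply: T_ow => n.
apply: IH; [exact: (a_in n.+1).2|exact: a_mono].
Qed.

Lemma Q_all o : Q o.
Proof.
elim/(well_founded_ind wfR): o => o IH i hi.
case: (pselect (exists k, le i k /\ below k o)) => [[k0 [hik0 hk0]]|hne]; last first.
  by apply: case_empty => k pk; apply: hne; exists k.
have hio : below i o by apply: below_le hik0 hk0.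
case: (pselect (exists k, [/\ le i k, below k o & forall m, lt k m -> ~ below m o]))
  => [[k [hik hk hmax]]|hnp].
  apply: (case_succ hik hk hmax); apply: (IH (Some k)) => //.
apply: case_limit => //.
  move=> k hik hk; apply: contrapT => hn; apply: hnp; exists k; split => // m hkm hm.
  by apply: hn; exists m.
move=> j hj i' hij; exact: (IH (Some j) hj i' hij).
Qed.

Lemma T_word : T (PI (OWord lt X)).
Proof.
have vw : valid_word (OWord lt X) by apply: (@valid_of _ _ _ _ code).
case: (pselect (exists x : I, True)) => [[x _]|hn].
  have [m hm] : exists m, forall y, ~ lt y m.
    apply: contrapT => hnm.
    have hall : forall y : I, False.
      elim/(well_founded_ind wf) => y IHy.
      by apply: hnm; exists y => z hz; exact: IHy z hz.
    exact: hall x.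
  have hle : forall y, le m y.
    by move=> y; case: (tri m y) => [->|[h|h]]; [left|right|exfalso; exact: hm y h].
  have e : PI (OWord lt X) = PI (seg (fun k => le m k /\ below k None)).
    apply: (pi_iso HP); [exact: valid_seg|by []|].
    exists (fun y => exist (fun k => le m k /\ below k None) y (conj (hle y) Logic.I)); split.
    - apply: inj_surj_bij; first by move=> y z /(congr1 (@proj1_sig _ _)).
      by case=> y py; exists y; apply: sig_eq.
    - by [].
    - by [].
  rewrite e; exact: (@Q_all None m Logic.I).
have e : PI (@eps_word _) = PI (OWord lt X).
  apply: (pi_iso HP); [exact: vw|by case|].
  exists (fun v : void => match v with end); split; try by case.
  apply: inj_surj_bij; first by case.
  by move=> y; exfalso; apply: hn; exists y.
by rewrite -e -Pi_one.
Qed.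

End Word.
End Trans.


Lemma merge_gen (M : finType) (pi : oword M -> M) (S : {set M} -> Prop) :
  ordinal_monoid (fun _ : M => True) pi ->
  S (set_one pi) -> (forall X Y, S X -> S Y -> S (set_mul pi X Y)) ->
  (forall X, S X -> S (set_omega pi X)) -> (forall X, S X -> S (set_sharp pi X)) ->
  ordinal_monoid_with_merge S
    (set_one pi) (@set_le M) (set_mul pi) (set_omega pi) (set_sharp pi).
Proof.
move=> H S1 Sm So Ss.
have HP := Pi_om H.
split.
- split.
  + by move=> x _; exact: subxx.
  + by move=> x y _ _ h1 h2; apply/eqP; rewrite eqEsubset h1 h2.
  + by move=> x y z _ _ _ h1 h2; exact: subset_trans h1 h2.
- exists (Pi pi); split.
  + split.
    * case=> Ix lt X [[code ci] [irr tr tri wf]] hX.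
      exact: (T_word H S1 Sm So ci irr tr tri wf hX).
    * by case: HP => _ Hi _ _ w1 w2 v1 v2 _ iso; apply: Hi.
    * by case: HP => _ _ Hs _ x _; apply: Hs.
    * case: HP => _ _ _ Ha W vW vl; apply: Ha; [exact: vW|move=> i; split; [exact: (vl i).1|by []]].
  + move=> Ix lt f g v hfg; apply: (@Pi_ordered M pi Ix lt f g v) => i.
    by case: (hfg i) => _ _ hh.

  + split.
    * exact: Pi_one.
    * by move=> x y _ _; exact: Pi_mul.
    * by move=> x _; exact: (Pi_omega H).
- exact: Ss.
- by move=> a b _ _; exact: (sharp_mono H).
- split.
  + by move=> a k y _; exact: (m1 H).
  + by move=> a e _; exact: (m2 H).
  + by move=> a _; exact: (m3 H).
  + by move=> a _; exact: (m4 H).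
  + by move=> a b _ _; exact: (m5 H).
Qed.

Theorem lemma5p1 (M : finType) (pi : oword M -> M) (Sigma : finType) (h : Sigma -> M) :
  ordinal_monoid (fun _ : M => True) pi ->
  ordinal_monoid_with_merge (fun _ : {set M} => True)
    (set_one pi) (@set_le M) (set_mul pi) (set_omega pi) (set_sharp pi)
  /\
  ordinal_monoid_with_merge (Sat pi h)
    (set_one pi) (@set_le M) (set_mul pi) (set_omega pi) (set_sharp pi).
Proof.
move=> H; split; apply: merge_gen => //.
- exact: Sat_one.
- by move=> X Y; apply: Sat_mul.
- by move=> X; apply: Sat_omega.
- by move=> X; apply: Sat_sharp.
Qed.
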